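(* Setting as in the context. (a) For $(\sigma,\tau)\in G$, one has $L(\sigma,\tau)=L$ if and only if $(\sigma,\tau)\in H$. (b) There exists a strict violation of $(M,N)$ if and only if there exists $(\sigma,\tau)\in G$ such that $L(\sigma,\tau)>L$ in the monomial order.
   Context: Let $K$ be a field and $\mathcal{Q}$ a bipartite quiver (every arrow goes from a source vertex to a sink vertex) with arrows $h_1,\dots,h_r$ and a nonnegative integer $m_\gamma$ attached to each vertex $\gamma$. For each $k$ let $X^{(k)}=[x^{(k)}_{ij}]$ be an $m_{{\rm t}(h_k)}\times m_{{\rm s}(h_k)}$ matrix of distinct independent variables (all variables distinct), in $K[X]$. For a sink $\alpha$, $A_\alpha$ is the horizontal concatenation $[X^{(r_1)}|\cdots|X^{(r_s)}]$ over the arrows $h_{r_1},\dots,h_{r_s}$ ($r_1<\dots<r_s$) with target $\alpha$; for a source $\beta$, $A_\beta$ is the vertical stacking of $X^{(r'_1)},\dots,X^{(r'_t)}$ over the arrows with source $\beta$ ($r'_1<\dots<r'_t$). Fix a lexicographic monomial order $>$ consistent with every $A_\gamma$ (in each $A_\gamma$ the variables strictly decrease from left to right along rows and from top to bottom along columns). Fix an arrow from a source $\gamma_2$ to a sink $\gamma_1$, let $A=A_{\gamma_1}$, $B=A_{\gamma_2}$, let $u,v$ be positive integers, let $M$ be a $u\times u$ minor of $A$ and $N$ a $v\times v$ minor of $B$. Let $L=\mathrm{lcm}(\mathrm{LM}(M),\mathrm{LM}(N))=x_{p_1}x_{p_2}\cdots x_{p_l}$ where $x_{p_1}>x_{p_2}>\dots>x_{p_l}$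 and $p_i=(\alpha_i,\beta_i,r_i)$ means $x_{p_i}=x^{(r_i)}_{\alpha_i\beta_i}$. Let $S_M=\{i: x_{p_i}\mid \mathrm{LM}(M)\}$ and $S_N=\{i: x_{p_i}\mid\mathrm{LM}(N)\}$. Let $\mathrm{Sym}(S_M)$ (resp. $\mathrm{Sym}(S_N)$) be the group of permutations of $\{1,\dots,l\}$ fixing every index outside $S_M$ (resp. $S_N$), and $G=\mathrm{Sym}(S_M)\times\mathrm{Sym}(S_N)$. For $(\sigma,\tau)\in G$ define the monomial $L(\sigma,\tau)=\prod_{i=1}^l x^{(r_i)}_{\alpha_{\sigma(i)},\beta_{\tau(i)}}$ (so $L(1,1)=L$). Let $H=\{(\pi,\pi)\}$ where $\pi$ ranges over permutations of $\{1,\dots,l\}$ fixing every index outside $S_M\cap S_N$ and satisfying $r_{\pi(i)}=r_i$ for all $i$. A strict violation of $(M,N)$ is a triple $(p_i,p_j,p_k)$ with distinct indices $i\in S_M$, $j\in S_N$, $k\in S_M\cap S_N$ such that $r_i=r_j=r_k$, $\alpha_i<\alpha_j<\alpha_k$ and $\beta_j<\beta_i<\beta_k$. *)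

(* Defs.v *)
From HB Require Import structures.
From mathcomp Require Import all_boot all_algebra fingroup perm.
From mathcomp Require Import mpoly.

Set Implicit Arguments.
Unset Strict Implicit.
Unset Printing Implicit Defensive.

Import GRing.Theory.

Section QuiverVariables.

(* A quiver with vertex set V and arrows h_0, ..., h_{r-1}; arrow h_k goes
   from s k to t k.  m attaches a nonnegative integer to each vertex. *)
Variables (V : finType) (r : nat) (s t : 'I_r -> V) (m : V -> nat).

Definition bipartite : Prop := forall k l : 'I_r, t k <> s l.

(* The variables x^{(k)}_{ij}: k an arrow, i < m_{t(h_k)}, j < m_{s(h_k)}. *)
Definition VarT : Type := {k : 'I_r & ('I_(m (t k)) * 'I_(m (s k)))%type}.
HB.instance Definition _ := Finite.on VarT.

Definition var_arr (x : VarT) : 'I_r := tag x.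
Definition var_row (x : VarT) : nat := (tagged x).1.
Definition var_col (x : VarT) : nat := (tagged x).2.

Definition nvar : nat := #|{: VarT}|.
Definition var_idx (x : VarT) : 'I_nvar := enum_rank x.

Definition find_var (k : 'I_r) (a b : nat) : option VarT :=
  [pick x : VarT | (var_arr x == k) && (var_row x == a) && (var_col x == b)].

(* A lexicographic monomial order is given by a total order on the
   variables, encoded by an injective rank: x > y iff rk x > rk y. *)
Variable rk : VarT -> nat.

(* consistency with every A_gamma: inside each A_gamma the variables strictly
   decrease from left to right along rows and from top to bottom along
   columns.  A_alpha (sink) = [X^(r1) | ... | X^(rs)] (r1 < ... < rs),
   A_beta (source) = vertical stacking of X^(r'1), ..., X^(r't). *)
Definition consistent_order : Prop :=
  forall x y : VarT,
  [/\ (var_arr x = var_arr y -> var_row x = var_row y ->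
         var_col x < var_col y -> rk y < rk x),
      (var_arr x = var_arr y -> var_col x = var_col y ->
         var_row x < var_row y -> rk y < rk x),
      (t (var_arr x) = t (var_arr y) -> var_row x = var_row y ->
         var_arr x < var_arr y -> rk y < rk x) &
      (s (var_arr x) = s (var_arr y) -> var_col x = var_col y ->
         var_arr x < var_arr y -> rk y < rk x)]%N.

Definition mrank (i : 'I_nvar) : nat := rk (enum_val i).

Definition lex_gt (m1 m2 : 'X_{1..nvar}) : Prop :=
  exists i : 'I_nvar, (m2 i < m1 i)%N /\
    forall j : 'I_nvar, (mrank i < mrank j)%N -> m1 j = m2 j.

Variable K : fieldType.

(* the polynomial x^{(k)}_{ab} of K[X] (0 if the indices are out of range,
   which never happens below) *)
Definition xv (k : 'I_r) (a b : nat) : {mpoly K[nvar]} :=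
  if find_var k a b is Some x then 'X_(var_idx x) else 0.

Definition is_LM (p : {mpoly K[nvar]}) (mm : 'X_{1..nvar}) : Prop :=
  mm \in msupp p /\
  forall m' : 'X_{1..nvar}, m' \in msupp p -> m' != mm -> lex_gt mm m'.

(* columns of a sink matrix A_gamma: pairs (k, j), t k = gamma, j < m_{s(h_k)};
   rows of a source matrix A_gamma: pairs (k, i), s k = gamma, i < m_{t(h_k)} *)
Definition ColSink : Type := {k : 'I_r & 'I_(m (s k))}.
HB.instance Definition _ := Finite.on ColSink.
Definition RowSource : Type := {k : 'I_r & 'I_(m (t k))}.
HB.instance Definition _ := Finite.on RowSource.

(* M is a u x u minor of A_gamma (gamma a sink): determinant of the submatrix
   on u distinct rows and u distinct columns (listing rows/columns in another
   order only changes the sign, hence not the leading monomial). *)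
Definition is_minor_sink (g : V) (u : nat) (M : {mpoly K[nvar]}) : Prop :=
  exists (ra : 'I_u -> 'I_(m g)) (ca : 'I_u -> ColSink),
    [/\ injective ra, injective ca, (forall j, t (tag (ca j)) = g) &
        M = (\det (\matrix_(i, j) xv (tag (ca j)) (ra i) (tagged (ca j))))%R].

Definition is_minor_source (g : V) (v : nat) (N : {mpoly K[nvar]}) : Prop :=
  exists (rb : 'I_v -> RowSource) (cb : 'I_v -> 'I_(m g)),
    [/\ injective rb, injective cb, (forall i, s (tag (rb i)) = g) &
        N = (\det (\matrix_(i, j) xv (tag (rb i)) (tagged (rb i)) (cb j)))%R].

(* L(sigma,tau) = prod_i x^{(r_i)}_{alpha_sigma(i), beta_tau(i)}, where
   p i = (alpha_i, beta_i, r_i), as a monomial (exponent vector). *)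
Definition Lmon (l : nat) (p : 'I_l -> VarT) (sg tau : {perm 'I_l})
    : 'X_{1..nvar} :=
  [multinom #|[set i : 'I_l |
      omap var_idx (find_var (var_arr (p i)) (var_row (p (sg i)))
                            (var_col (p (tau i)))) == Some j]| | j < nvar].

End QuiverVariables.

(* Main.v *)
Require Import Defs.
From HB Require Import structures.
From mathcomp Require Import all_boot all_algebra fingroup perm.
From mathcomp Require Import mpoly.
From mathcomp Require Import zify.
From Stdlib Require Classical_Prop.

Set Implicit Arguments.
Unset Strict Implicit.
Unset Printing Implicit Defensive.

Module Helpers.
Import GRing.Theory.

Section Core.
Variables (V : eqType) (nr : nat) (tg sc : 'I_nr -> V) (mm : V -> nat) (g1 g2 : V).
Variable F : 'I_nr -> nat -> nat -> nat.
Definition vld (ro : 'I_nr) al be := (al < mm (tg ro)) && (be < mm (sc ro)).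
Hypothesis Finj : forall ro al be ro' al' be', vld ro al be -> vld ro' al' be' ->
  F ro al be = F ro' al' be' -> [/\ ro = ro', al = al' & be = be'].
Hypothesis Fc1 : forall ro al be be', vld ro al be -> vld ro al be' -> be < be' ->
  F ro al be' < F ro al be.
Hypothesis Fc2 : forall ro al al' be, vld ro al be -> vld ro al' be -> al < al' ->
  F ro al' be < F ro al be.
Hypothesis Fc3 : forall ro ro' al be be', tg ro = tg ro' -> vld ro al be -> vld ro' al be' ->
  ro < ro' -> F ro' al be' < F ro al be.
Hypothesis Fc4 : forall ro ro' al al' be, sc ro = sc ro' -> vld ro al be -> vld ro' al' be ->
  ro < ro' -> F ro' al' be < F ro al be.

Lemma rowcmp ro ro' al be be' : tg ro = tg ro' -> vld ro al be -> vld ro' al be' ->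
  (ro < ro' \/ (ro = ro' /\ be < be')) -> F ro' al be' < F ro al be.
Proof.
move=> E v1 v2 [lt|[eq lt]]; first exact: Fc3.
subst ro'; exact: Fc1.
Qed.

Lemma colcmp ro ro' al al' be : sc ro = sc ro' -> vld ro al be -> vld ro' al' be ->
  (ro < ro' \/ (ro = ro' /\ al < al')) -> F ro' al' be < F ro al be.
Proof.
move=> E v1 v2 [lt|[eq lt]]; first exact: Fc4.
subst ro'; exact: Fc2.
Qed.

Lemma blk_le ro al be al' be' : vld ro al be -> vld ro al' be' -> al <= al' -> be <= be' ->
  F ro al' be' <= F ro al be.
Proof.
move=> /andP[h1 h2] /andP[h3 h4] ha hb.
have v : vld ro al be' by apply/andP.
apply: (@leq_trans (F ro al be')).
  rewrite leq_eqVlt in ha; case/orP: ha => [/eqP->//|ha].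
  by apply: ltnW; apply: Fc2 => //; apply/andP.
rewrite leq_eqVlt in hb; case/orP: hb => [/eqP->//|hb].
by apply: ltnW; apply: Fc1 => //; apply/andP.
Qed.

Lemma blk_lt ro al be al' be' : vld ro al be -> vld ro al' be' -> al <= al' -> be <= be' ->
  (al < al') || (be < be') -> F ro al' be' < F ro al be.
Proof.
move=> /andP[h1 h2] /andP[h3 h4] ha hb /orP[ha'|hb'].
  have v1 : vld ro al be' by apply/andP.
  have v2 : vld ro al' be' by apply/andP.
  apply: (@leq_trans (F ro al be')); first exact: Fc2.
  by apply: (@blk_le ro al be al be') => //; apply/andP.
have v1 : vld ro al be' by apply/andP.
have v2 : vld ro al' be' by apply/andP.
apply: (@leq_ltn_trans (F ro al be')).
  by apply: (@blk_le ro al be' al' be').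
by apply: Fc1 => //; apply/andP.
Qed.

Variables (l : nat) (arr : 'I_l -> 'I_nr) (a b : 'I_l -> nat) (SM SN : pred 'I_l).
Implicit Types i j k c : 'I_l.
Definition Fp i := F (arr i) (a i) (b i).
Hypothesis Hvp : forall i, vld (arr i) (a i) (b i).
Hypothesis Hdec : forall i j : 'I_l, i < j -> Fp j < Fp i.
Hypothesis HtM : forall i, SM i -> tg (arr i) = g1.
Hypothesis HsN : forall i, SN i -> sc (arr i) = g2.
Hypothesis HchM : forall i j, SM i -> SM j -> i < j ->
  a i < a j /\ (arr i < arr j \/ (arr i = arr j /\ b i < b j)).
Hypothesis HchN : forall i j, SN i -> SN j -> i < j ->
  b i < b j /\ (arr i < arr j \/ (arr i = arr j /\ a i < a j)).

Lemma Fp_inj i j : Fp i = Fp j -> i = j.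
Proof.
move=> E; case: (ltngtP i j) => [h|h|h]; last exact: val_inj.
- by have := Hdec h; rewrite E ltnn.
- by have := Hdec h; rewrite E ltnn.
Qed.

Lemma Fp_le i j : i <= j -> Fp j <= Fp i.
Proof.
rewrite leq_eqVlt => /orP[/eqP h|h]; last exact: ltnW (Hdec h).
by rewrite (val_inj h).
Qed.

Lemma SM_row i j : SM i -> SM j -> a i = a j -> i = j.
Proof.
move=> hi hj E; case: (ltngtP i j) => [h|h|h]; last exact: val_inj.
- by have [] := HchM hi hj h; rewrite E ltnn.
- by have [] := HchM hj hi h; rewrite E ltnn.
Qed.

Lemma SM_col i j : SM i -> SM j -> arr i = arr j -> b i = b j -> i = j.
Proof.
move=> hi hj E E'; case: (ltngtP i j) => [h|h|h]; last exact: val_inj.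
- have [_ [] ] := HchM hi hj h; first by rewrite E ltnn.
  by rewrite E' ltnn => -[].
- have [_ [] ] := HchM hj hi h; first by rewrite E ltnn.
  by rewrite E' ltnn => -[].
Qed.

Lemma SN_col i j : SN i -> SN j -> b i = b j -> i = j.
Proof.
move=> hi hj E; case: (ltngtP i j) => [h|h|h]; last exact: val_inj.
- by have [] := HchN hi hj h; rewrite E ltnn.
- by have [] := HchN hj hi h; rewrite E ltnn.
Qed.

Lemma SN_row i j : SN i -> SN j -> arr i = arr j -> a i = a j -> i = j.
Proof.
move=> hi hj E E'; case: (ltngtP i j) => [h|h|h]; last exact: val_inj.
- have [_ [] ] := HchN hi hj h; first by rewrite E ltnn.
  by rewrite E' ltnn => -[].
- have [_ [] ] := HchN hj hi h; first by rewrite E ltnn.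
  by rewrite E' ltnn => -[].
Qed.

Definition inG (sg tau : {perm 'I_l}) :=
  (forall i, ~~ SM i -> sg i = i) /\ (forall i, ~~ SN i -> tau i = i).

Definition Fq (sg tau : {perm 'I_l}) i := F (arr i) (a (sg i)) (b (tau i)).

Definition viol := exists i j k : 'I_l,
  [/\ [/\ i != j, j != k & i != k], [/\ SM i, SN j, SM k & SN k],
      arr i = arr j /\ arr j = arr k, a i < a j < a k & b j < b i < b k].

Definition inH (sg tau : {perm 'I_l}) :=
  [/\ sg = tau, (forall i, ~~ (SM i && SN i) -> sg i = i) &
      (forall i, arr (sg i) = arr i)].

Definition cnt (f : 'I_l -> nat) w := \sum_(x : 'I_l) (f x == w).
Definition eqcnt f g := forall w, cnt f w = cnt g w.
Definition lexgtc f g := exists w, cnt g w < cnt f w /\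
  forall w', w < w' -> cnt f w' = cnt g w'.

Definition Dm (sg tau : {perm 'I_l}) := [set x | (sg x != x) || (tau x != x)].

Section G.
Variables (sg tau : {perm 'I_l}).
Hypothesis HG : inG sg tau.

Lemma movM i : sg i != i -> SM i /\ SM (sg i).
Proof.
move=> h; split; first by apply/negPn/negP => /(proj1 HG) e; rewrite e eqxx in h.
apply/negPn/negP => /(proj1 HG) e; move/perm_inj: e => e; by rewrite e eqxx in h.
Qed.

Lemma movN i : tau i != i -> SN i /\ SN (tau i).
Proof.
move=> h; split; first by apply/negPn/negP => /(proj2 HG) e; rewrite e eqxx in h.
apply/negPn/negP => /(proj2 HG) e; move/perm_inj: e => e; by rewrite e eqxx in h.
Qed.

Lemma vq i : vld (arr i) (a (sg i)) (b (tau i)).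
Proof.
have /andP[h1 h2] := Hvp i.
apply/andP; split.
  case: (eqVneq (sg i) i) => [->//|ne].
  have [s1 s2] := movM ne.
  by rewrite (HtM s1) -(HtM s2); case/andP: (Hvp (sg i)).
case: (eqVneq (tau i) i) => [->//|ne].
have [s1 s2] := movN ne.
by rewrite (HsN s1) -(HsN s2); case/andP: (Hvp (tau i)).
Qed.

Lemma a_mono i : i <= sg i -> a i <= a (sg i).
Proof.
case: (eqVneq (sg i) i) => [->//|ne] le.
have [s1 s2] := movM ne.
have lt : i < sg i by rewrite ltn_neqAle le andbT; apply/eqP => /val_inj e; rewrite -e eqxx in ne.
by apply: ltnW; case: (HchM s1 s2 lt).
Qed.

Lemma b_mono i : i <= tau i -> b i <= b (tau i).
Proof.
case: (eqVneq (tau i) i) => [->//|ne] le.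
have [s1 s2] := movN ne.
have lt : i < tau i by rewrite ltn_neqAle le andbT; apply/eqP => /val_inj e; rewrite -e eqxx in ne.
by apply: ltnW; case: (HchN s1 s2 lt).
Qed.

Lemma W1 i : i <= sg i -> i <= tau i -> Fq sg tau i <= Fp i.
Proof.
move=> h1 h2; rewrite /Fq /Fp.
by apply: blk_le; [exact: Hvp| exact: vq | exact: a_mono | exact: b_mono].
Qed.

Lemma W1s i : i <= sg i -> i <= tau i -> (sg i != i) || (tau i != i) ->
  Fq sg tau i < Fp i.
Proof.
move=> h1 h2 hm; rewrite /Fq /Fp.
apply: blk_lt; [exact: Hvp| exact: vq | exact: a_mono | exact: b_mono|].
case/orP: hm => ne.
  have [s1 s2] := movM ne.
  have lt : i < sg i by rewrite ltn_neqAle h1 andbT; apply/eqP => /val_inj e; rewrite -e eqxx in ne.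
  by case: (HchM s1 s2 lt) => ->.
have [s1 s2] := movN ne.
have lt : i < tau i by rewrite ltn_neqAle h2 andbT; apply/eqP => /val_inj e; rewrite -e eqxx in ne.
by case: (HchN s1 s2 lt) => ->; rewrite orbT.
Qed.

Lemma W2 i : sg i < i -> i <= tau i -> Fq sg tau i < Fp (sg i).
Proof.
move=> h1 h2.
have ne : sg i != i by apply/eqP => e; rewrite e ltnn in h1.
have [s1 s2] := movM ne.
have [ha hc] := HchM s2 s1 h1.
rewrite /Fq /Fp; apply: rowcmp; [by rewrite (HtM s1) (HtM s2) | exact: Hvp | exact: vq |].
case: hc => [->|[-> hb]]; [by left | right; split => //].
exact: leq_trans hb (b_mono h2).
Qed.

Lemma W3 i : tau i < i -> i <= sg i -> Fq sg tau i < Fp (tau i).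
Proof.
move=> h1 h2.
have ne : tau i != i by apply/eqP => e; rewrite e ltnn in h1.
have [s1 s2] := movN ne.
have [hb hc] := HchN s2 s1 h1.
rewrite /Fq /Fp; apply: colcmp; [by rewrite (HsN s1) (HsN s2) | exact: Hvp | exact: vq |].
case: hc => [->|[-> ha]]; [by left | right; split => //].
exact: leq_trans ha (a_mono h2).
Qed.

Lemma W5 i : sg i < i -> tau i < i -> ~ viol ->
  Fq sg tau i <= Fp (sg i) \/ Fq sg tau i <= Fp (tau i).
Proof.
move=> h1 h2 nv.
set j := sg i in h1 *; set k := tau i in h2 *.
have ne1 : j != i by apply/eqP => e; rewrite e ltnn in h1.
have ne2 : k != i by apply/eqP => e; rewrite e ltnn in h2.
have [s1 s2] := movM ne1; have [n1 n2] := movN ne2.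
have [ha hc] := HchM s2 s1 h1.
have [hb hd] := HchN n2 n1 h2.
have vqi := vq i.
have rowc : (arr j < arr i \/ (arr j = arr i /\ b j < b k)) -> Fq sg tau i <= Fp j.
  move=> hh; apply: ltnW; rewrite /Fq /Fp; apply: rowcmp => //; try exact: Hvp.
  by rewrite (HtM s1) (HtM s2).
have colc : (arr k < arr i \/ (arr k = arr i /\ a k < a j)) -> Fq sg tau i <= Fp k.
  move=> hh; apply: ltnW; rewrite /Fq /Fp; apply: colcmp => //; try exact: Hvp.
  by rewrite (HsN n1) (HsN n2).
case: hc => [lt|[ej hbj]]; first by left; apply: rowc; left.
case: (ltnP (b j) (b k)) => [lt|le1]; first by left; apply: rowc; right.
case: hd => [lt|[ek hak]]; first by right; apply: colc; left.
case: (ltnP (a k) (a j)) => [lt|le2]; first by right; apply: colc; right.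
rewrite leq_eqVlt in le1; case/orP: le1 => [/eqP e1|lt1].
  by left; rewrite /Fq /Fp -/j -/k e1 ej.
rewrite leq_eqVlt in le2; case/orP: le2 => [/eqP e2|lt2].
  by right; rewrite /Fq /Fp -/j -/k -e2 ek.
exfalso; apply: nv; exists j, k, i; split => //.
- split => //; apply/eqP => e.
  by move: lt2; rewrite e ltnn.
- by split; rewrite ?ej ?ek.
- by rewrite lt2.
- by rewrite lt1.
Qed.

Lemma witness i : ~ viol -> exists c, [/\ (c == i) || (c == sg i) || (c == tau i) &
  Fq sg tau i <= Fp c].
Proof.
move=> nv.
case: (ltnP (sg i) i) => h1; case: (ltnP (tau i) i) => h2.
- case: (W5 h1 h2 nv) => h; [exists (sg i) | exists (tau i)];
    by rewrite eqxx ?orbT.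
- by exists (sg i); rewrite eqxx orbT; split => //; exact: ltnW (W2 h1 h2).
- by exists (tau i); rewrite eqxx orbT; split => //; exact: ltnW (W3 h2 h1).
- by exists i; rewrite eqxx; split => //; exact: W1.
Qed.


Lemma Finj_q i d : Fq sg tau i = Fp d ->
  [/\ arr i = arr d, a (sg i) = a d & b (tau i) = b d].
Proof. by move=> E; apply: Finj E; [exact: vq | exact: Hvp]. Qed.

Lemma perm_mov (s : {perm 'I_l}) x : s x != x -> s (s x) != s x.
Proof. by apply: contra => /eqP /perm_inj ->. Qed.

Lemma Dm_sg i : i \in Dm sg tau -> sg i \in Dm sg tau.
Proof.
case: (eqVneq (sg i) i) => [->//|ne] _.
by rewrite inE (perm_mov ne).
Qed.

Lemma Dm_tau i : i \in Dm sg tau -> tau i \in Dm sg tau.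
Proof.
case: (eqVneq (tau i) i) => [->//|ne] _.
by rewrite inE (perm_mov ne) orbT.
Qed.

Section Claims.
Variables (d i : 'I_l).
Hypothesis Hd : d \in Dm sg tau.
Hypothesis Hmin : forall y, y \in Dm sg tau -> d <= y.
Hypothesis Hi : i \in Dm sg tau.
Hypothesis Heq : Fq sg tau i = Fp d.

Lemma rowclaim : SM d -> sg i = d /\ sg i != i.
Proof.
move=> sd; have [ea eb ec] := Finj_q Heq.
case: (eqVneq (sg i) i) => [e|ne].
  have nt : tau i != i by move: Hi; rewrite inE e eqxx.
  exfalso.
  case: (ltngtP (tau i) i) => [lt|gt|eqv].
  - have h := W3 lt (eq_leq (congr1 val (esym e))).
    have h2 := Fp_le (Hmin (Dm_tau Hi)).
    by move: h; rewrite Heq => h; have := leq_trans h h2; rewrite ltnn.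
  - have h := W1s (eq_leq (congr1 val (esym e))) (ltnW gt) (introT orP (or_intror nt)).
    have h2 := Fp_le (Hmin Hi).
    by move: h; rewrite Heq => h; have := leq_trans h h2; rewrite ltnn.
  - by rewrite (val_inj eqv) eqxx in nt.
have [s1 s2] := movM ne; split => //.
exact: SM_row s2 sd eb.
Qed.

Lemma colclaim : SN d -> tau i = d /\ tau i != i.
Proof.
move=> sd; have [ea eb ec] := Finj_q Heq.
case: (eqVneq (tau i) i) => [e|ne].
  have nt : sg i != i by move: Hi; rewrite inE e eqxx orbF.
  exfalso.
  case: (ltngtP (sg i) i) => [lt|gt|eqv].
  - have h := W2 lt (eq_leq (congr1 val (esym e))).
    have h2 := Fp_le (Hmin (Dm_sg Hi)).
    by move: h; rewrite Heq => h; have := leq_trans h h2; rewrite ltnn.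
  - have h := W1s (ltnW gt) (eq_leq (congr1 val (esym e))) (introT orP (or_introl nt)).
    have h2 := Fp_le (Hmin Hi).
    by move: h; rewrite Heq => h; have := leq_trans h h2; rewrite ltnn.
  - by rewrite (val_inj eqv) eqxx in nt.
have [s1 s2] := movN ne; split => //.
exact: SN_col s2 sd ec.
Qed.

Lemma reduce : exists sg' tau', [/\ inG sg' tau', #|Dm sg' tau'| < #|Dm sg tau|,
  (forall x, Fq sg' tau' x = Fq sg tau (tperm d i x)) &
  (inH sg' tau' -> inH sg tau)].
Proof.
have [ea eb ec] := Finj_q Heq.
set t := tperm d i.
have arrt x : arr (t x) = arr x.
  by rewrite /t; case: tpermP => [->|->|]; rewrite ?ea.
have tt x : t (t x) = x by rewrite /t tpermK.
have dDm : d \in Dm sg tau := Hd.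
have Hdsub : forall sg' tau' : {perm 'I_l},
    (forall x, x != d -> x != i -> sg' x = sg x /\ tau' x = tau x) ->
    sg' d = d -> tau' d = d -> #|Dm sg' tau'| < #|Dm sg tau|.
  move=> sg' tau' hx h1 h2; apply: proper_card; apply/properP; split.
    apply/subsetP => x; rewrite !inE.
    case: (eqVneq x d) => [->|nd]; first by rewrite h1 h2 eqxx.
    case: (eqVneq x i) => [->|ni]; first by move=> _; move: Hi; rewrite inE.
    by have [-> ->] := hx x nd ni.
  by exists d => //; rewrite inE h1 h2 eqxx.
have md : (sg d != d) || (tau d != d) by move: Hd; rewrite inE.
have SMSN : SM d \/ SN d.
  case/orP: md => h; [left; exact: (movM h).1 | right; exact: (movN h).1].
case: (boolP (SM d)) => smd; case: (boolP (SN d)) => snd.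
-
  have [e1 n1] := rowclaim smd; have [e2 n2] := colclaim snd.
  have nid : i != d by apply/eqP => E; move: n1; rewrite e1 E eqxx.
  have [si _] := movM n1; have [ni _] := movN n2.
  exists (t * sg)%g, (t * tau)%g; split.
  + split => x hx.
      have xd : x != d by apply: contraNneq hx => ->.
      have xi : x != i by apply: contraNneq hx => ->.
      by rewrite permM /t tpermD 1?eq_sym // (proj1 HG).
    have xd : x != d by apply: contraNneq hx => ->.
    have xi : x != i by apply: contraNneq hx => ->.
    by rewrite permM /t tpermD 1?eq_sym // (proj2 HG).
  + apply: Hdsub.
    * by move=> x xd xi; rewrite !permM /t tpermD 1?eq_sym.
    * by rewrite permM /t tpermL e1.
    * by rewrite permM /t tpermL e2.
  + by move=> x; rewrite /Fq !permM arrt.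
  + case=> E hf harr; split.
    * apply/permP => x; have := congr1 (fun s : {perm 'I_l} => s (t x)) E.
      by rewrite /= !permM tt.
    * move=> x hx.
      have xd : x != d by apply: contraNneq hx => ->; rewrite smd snd.
      have xi : x != i by apply: contraNneq hx => ->; rewrite si ni.
      by have := hf x hx; rewrite permM /t tpermD 1?eq_sym.
    * move=> x; have := harr (t x); rewrite permM tt arrt //.
-
  have [e1 n1] := rowclaim smd.
  have nid : i != d by apply/eqP => E; move: n1; rewrite e1 E eqxx.
  have [si _] := movM n1.
  have td : tau d = d := (proj2 HG) d snd.
  have sdd : sg d != d by move: md; rewrite td eqxx orbF.
  exists (t * sg)%g, tau; split.
  + split => x hx; last exact: (proj2 HG).
    have xd : x != d by apply: contraNneq hx => ->.
    have xi : x != i by apply: contraNneq hx => ->.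
    by rewrite permM /t tpermD 1?eq_sym // (proj1 HG).
  + apply: Hdsub.
    * by move=> x xd xi; rewrite !permM /t tpermD 1?eq_sym.
    * by rewrite permM /t tpermL e1.
    * exact: td.
  + move=> x; rewrite /Fq !permM arrt; congr F.
    rewrite /t; case: tpermP => [->|->|//]; by rewrite ?ec td.
  + case=> E hf harr; exfalso.
    have e3 : tau i = sg d by rewrite -E permM /t tpermR.
    have s3 : SM (sg d) := (movM sdd).2.
    have a3 : arr (tau i) = arr d by rewrite -E harr.
    have := SM_col s3 smd; rewrite -e3 a3 ec => /(_ erefl erefl) e4.
    by move: sdd; rewrite -e3 e4 eqxx.
-
  have [e2 n2] := colclaim snd.
  have nid : i != d by apply/eqP => E; move: n2; rewrite e2 E eqxx.
  have sd : sg d = d := (proj1 HG) d smd.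
  have tdd : tau d != d by move: md; rewrite sd eqxx.
  exists sg, (t * tau)%g; split.
  + split => x hx; first exact: (proj1 HG).
    have xd : x != d by apply: contraNneq hx => ->.
    have [ni _] := movN n2.
    have xi : x != i by apply: contraNneq hx => ->.
    by rewrite permM /t tpermD 1?eq_sym // (proj2 HG).
  + apply: Hdsub.
    * by move=> x xd xi; rewrite !permM /t tpermD 1?eq_sym.
    * exact: sd.
    * by rewrite permM /t tpermL e2.
  + move=> x; rewrite /Fq !permM arrt; congr F.
    rewrite /t; case: tpermP => [->|->|//]; by rewrite ?eb sd.
  + case=> E hf harr; exfalso.
    have e3 : sg i = tau d by rewrite E permM /t tpermR.
    have s3 : SN (tau d) := (movN tdd).2.
    have a3 : arr (sg i) = arr d by rewrite harr.
    have := SN_row s3 snd; rewrite -e3 a3 eb => /(_ erefl erefl) e4.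
    by move: tdd; rewrite -e3 e4 eqxx.
- by exfalso; case: SMSN => h; [move: smd | move: snd]; rewrite h.
Qed.

End Claims.

End G.

Lemma cnt_perm f (pi : {perm 'I_l}) w : cnt (fun x => f (pi x)) w = cnt f w.
Proof. by rewrite /cnt [RHS](reindex_inj (@perm_inj _ pi)). Qed.

Lemma cnt_le (f g : 'I_l -> nat) w w' : (forall x, (f x == w) <= (g x == w')) ->
  cnt f w <= cnt g w'.
Proof. by move=> h; apply: leq_sum => x _; apply: h. Qed.

Lemma cnt_lt (f g : 'I_l -> nat) w w' k : (forall x, (f x == w) <= (g x == w')) ->
  (f k == w) < (g k == w') -> cnt f w < cnt g w'.
Proof.
move=> h hk; rewrite /cnt (bigD1 k) //= [X in _ < X](bigD1 k) //=.
have : \sum_(i0 < l | i0 != k) (f i0 == w) <= \sum_(i0 < l | i0 != k) (g i0 == w').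
  by apply: leq_sum => x _; apply: h.
by move=> hs; rewrite -addSn; apply: leq_add.
Qed.

Definition PP sg tau := (eqcnt (Fq sg tau) Fp -> inH sg tau) /\
  (~ viol -> ~ lexgtc (Fq sg tau) Fp).

Lemma PP_id : PP 1 1.
Proof.
have E : forall x, Fq 1 1 x = Fp x by move=> x; rewrite /Fq !perm1.
split.
  by move=> _; split => // x; rewrite perm1.
move=> _ [w [h _]].
have : cnt (Fq 1 1) w = cnt Fp w by apply: eq_bigr => x _; rewrite E.
by move=> e; rewrite e ltnn in h.
Qed.

Lemma step sg tau : inG sg tau ->
  (forall sg' tau', inG sg' tau' -> #|Dm sg' tau'| < #|Dm sg tau| -> PP sg' tau') ->
  PP sg tau.
Proof.
move=> HG IH.
case: (set_0Vmem (Dm sg tau)) => [E|[x0 x0D]].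
  have e1 : sg = 1%g.
    apply/permP => x; rewrite perm1; apply/eqP.
    by have := in_set0 x; rewrite -E inE => /norP [/negPn].
  have e2 : tau = 1%g.
    apply/permP => x; rewrite perm1; apply/eqP.
    by have := in_set0 x; rewrite -E inE => /norP [_ /negPn].
  by rewrite e1 e2; exact: PP_id.
case: (arg_minnP (fun x : 'I_l => val x) x0D) => d dD0 dmin.
have dD : d \in Dm sg tau := dD0.
case: (boolP [exists x, (x \in Dm sg tau) && (Fq sg tau x == Fp d)]).
  case/existsP => i /andP[iD /eqP ieq].
  have [sg' [tau' [HG' hc hF hH]]] := reduce HG dD dmin iD ieq.
  have [IH1 IH2] := IH sg' tau' HG' hc.
  have ec : forall w, cnt (Fq sg' tau') w = cnt (Fq sg tau) w.
    by move=> w; rewrite -(cnt_perm (Fq sg tau) (tperm d i)); apply: eq_bigr => x _; rewrite hF.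
  split.
    by move=> h; apply: hH; apply: IH1 => w; rewrite ec.
  move=> nv [w [h1 h2]]; apply: (IH2 nv); exists w; split; first by rewrite ec.
  by move=> w' lt; rewrite ec; apply: h2.
rewrite negb_exists => /forallP nh.
have nh' : forall x, x \in Dm sg tau -> Fq sg tau x != Fp d.
  by move=> x xD; have := nh x; rewrite xD.
have c0 : cnt (Fq sg tau) (Fp d) = 0.
  apply: big1 => x _; apply/eqP; rewrite eqb0.
  case: (boolP (x \in Dm sg tau)) => xD; first exact: nh'.
  move: xD; rewrite inE negb_or !negbK => /andP[/eqP e1 /eqP e2].
  rewrite /Fq e1 e2 -/(Fp x); apply/eqP => /Fp_inj e.
  move: dD; rewrite -e => h; have : x \in Dm sg tau := h.
  by rewrite inE e1 e2 eqxx.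
have c1 : 0 < cnt Fp (Fp d).
  by rewrite /cnt (bigD1 d) //= eqxx.
split.
  by move=> h; have := h (Fp d); rewrite c0 => e; rewrite -e ltnn in c1.
move=> nv [w [h1 h2]].
have below : forall x, x \in Dm sg tau -> Fq sg tau x < Fp d.
  move=> x xD; have [c [hc hle]] := witness HG x nv.
  have cD : c \in Dm sg tau.
    by case/orP: hc => [/orP[]|] /eqP ->; [ | exact: Dm_sg | exact: Dm_tau].
  rewrite ltn_neqAle nh' //=.
  exact: leq_trans hle (Fp_le (dmin c cD)).
case: (ltnP w (Fp d)) => hw.
  by have := h2 _ hw; rewrite c0 => e; rewrite -e ltnn in c1.
have : cnt (Fq sg tau) w <= cnt Fp w.
  apply: cnt_le => x.
  case: (boolP (x \in Dm sg tau)) => xD.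
    have := below x xD => hb.
    have -> : (Fq sg tau x == w) = false.
      by apply/eqP => e; move: hb; rewrite e => hb; have := leq_trans hb hw; rewrite ltnn.
    by [].
  move: xD; rewrite inE negb_or !negbK => /andP[/eqP e1 /eqP e2].
  by rewrite /Fq e1 e2.
by rewrite leqNgt h1.
Qed.

Lemma core_ind n sg tau : inG sg tau -> #|Dm sg tau| <= n -> PP sg tau.
Proof.
elim: n sg tau => [|n IH] sg tau HG hn; apply: step => // sg' tau' HG' lt.
  lia.
apply: IH => //; lia.
Qed.

Lemma partA sg tau : inG sg tau -> (eqcnt (Fq sg tau) Fp <-> inH sg tau).
Proof.
move=> HG; split; first exact: (core_ind HG (leqnn _)).1.
case=> E _ harr w; rewrite -E.
rewrite -(cnt_perm Fp sg); apply: eq_bigr => x _.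
by rewrite /Fq /Fp harr.
Qed.

Lemma partB : viol <-> exists sg tau, inG sg tau /\ lexgtc (Fq sg tau) Fp.
Proof.
split; last first.
  case=> sg [tau [HG hl]]; apply/(@Classical_Prop.NNPP _) => nv.
  exact: (core_ind HG (leqnn _)).2 nv hl.
case=> i [j [k [[ij jk ik] [si nj sk nk] [aij ajk] /andP[ai aj] /andP[bj bi]]]].
exists (tperm i k), (tperm j k); split.
  split => x hx.
    by apply: tpermD; apply: contraNneq hx => <-.
  by apply: tpermD; apply: contraNneq hx => <-.
set ro := arr i.
have vi := Hvp i; have vj := Hvp j; have vk := Hvp k.
rewrite /vld -/ro in vi; rewrite /vld -aij -/ro in vj; rewrite /vld -ajk -aij -/ro in vk.
case/andP: vi => vi1 vi2; case/andP: vj => vj1 vj2; case/andP: vk => vk1 vk2.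
have V1 : vld ro (a i) (b j) by apply/andP.
have V2 : vld ro (a k) (b i) by apply/andP.
have V3 : vld ro (a j) (b k) by apply/andP.
have Vi : vld ro (a i) (b i) by apply/andP.
have Vj : vld ro (a j) (b j) by apply/andP.
have Vk : vld ro (a k) (b k) by apply/andP.
set W := F ro (a i) (b j).
have ji : j != i by rewrite eq_sym.
have kj : k != j by rewrite eq_sym.
have ki : k != i by rewrite eq_sym.
have Fqk : Fq (tperm i k) (tperm j k) k = W by rewrite /Fq tpermR tpermR -ajk -aij.
have Fqi : Fq (tperm i k) (tperm j k) i = F ro (a k) (b i).
  by rewrite /Fq tpermL (tpermD ji ki).
have Fqj : Fq (tperm i k) (tperm j k) j = F ro (a j) (b k).
  by rewrite /Fq (tpermD ij kj) tpermL -aij.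
have Fpi : Fp i = F ro (a i) (b i) by [].
have Fpj : Fp j = F ro (a j) (b j) by rewrite /Fp -aij.
have Fpk : Fp k = F ro (a k) (b k) by rewrite /Fp -ajk -aij.
have L1 : Fp i < W by rewrite Fpi; apply: Fc1.
have L2 : Fp j < W by rewrite Fpj; apply: Fc2.
have aik : a i < a k := ltn_trans ai aj.
have bjk : b j < b k := ltn_trans bj bi.
have L3 : Fp k < W.
  by rewrite Fpk; apply: (blk_lt V1 Vk (ltnW aik) (ltnW bjk)); rewrite aik.
have L4 : Fq (tperm i k) (tperm j k) i < W.
  by rewrite Fqi; apply: (blk_lt V1 V2 (ltnW aik) (ltnW bj)); rewrite aik.
have L5 : Fq (tperm i k) (tperm j k) j < W.
  by rewrite Fqj; apply: (blk_lt V1 V3 (ltnW ai) (ltnW bjk)); rewrite ai.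
have oth : forall x, x != i -> x != j -> x != k ->
    Fq (tperm i k) (tperm j k) x = Fp x.
  by move=> x xi xj xk; rewrite /Fq !tpermD // eq_sym.
have small : forall x, (x == i) || (x == j) || (x == k) ->
    Fp x < W /\ (x != k -> Fq (tperm i k) (tperm j k) x < W).
  move=> x /orP[/orP[]|] /eqP ->; split => //; by rewrite eqxx.
exists W; split.
  apply: (@cnt_lt _ _ _ _ k); last first.
    have -> : (Fp k == W) = false by apply/eqP => e; move: L3; rewrite e ltnn.
    by rewrite Fqk eqxx.
  move=> x.
  case: (boolP ((x == i) || (x == j) || (x == k))) => hx.
    have [h _] := small x hx.
    by have -> : (Fp x == W) = false by apply/eqP => e; move: h; rewrite e ltnn.
  move: hx; rewrite !negb_or => /andP[/andP[xi xj] xk].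
  by rewrite oth.
move=> w' lt; apply: eq_bigr => x _.
case: (boolP ((x == i) || (x == j) || (x == k))) => hx.
  have [h1 h2] := small x hx.
  have -> : (Fp x == w') = false.
    by apply/eqP => e; move: h1; rewrite e => h1; have := ltn_trans h1 lt; rewrite ltnn.
  suff -> : (Fq (tperm i k) (tperm j k) x == w') = false by [].
  case: (eqVneq x k) => [->|xk].
    by rewrite Fqk; apply/negbTE/eqP => e; move: lt; rewrite e ltnn.
  have h3 := h2 xk.
  by apply/negbTE/eqP => e; move: h3; rewrite e => h3; have := ltn_trans h3 lt; rewrite ltnn.
move: hx; rewrite !negb_or => /andP[/andP[xi xj] xk].
by rewrite oth.
Qed.

End Core.

Lemma mcoeff_signX (K : fieldType) n (b : bool) (mm mm' : 'X_{1..n}) :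
  (((-1) ^+ b * 'X_[mm] : {mpoly K[n]})@_mm' = (-1) ^+ b * (mm == mm')%:R)%R.
Proof. by case: b; rewrite ?expr1 ?expr0 ?mulN1r ?mul1r ?mcoeffN mcoeffX. Qed.

Section DetG.
Variables (K : fieldType) (n u : nat) (f : 'I_u -> 'I_u -> 'I_n).
Hypothesis finj : forall i j i' j', f i j = f i' j' -> i = i' /\ j = j'.

Definition mono (pi : 'S_u) : 'X_{1..n} :=
  [multinom \sum_(x < u) (f x (pi x) == j) | j < n].

Lemma monoE pi j : mono pi j = \sum_(x < u) (f x (pi x) == j).
Proof. by rewrite mnmE. Qed.

Lemma prodX (pi : 'S_u) :
  (\prod_i ('X_(f i (pi i)) : {mpoly K[n]}))%R = 'X_[mono pi].
Proof.
have -> : mono pi = (\sum_(x < u) U_(f x (pi x)))%MM.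
  by apply/mnmP => j; rewrite mnmE mnm_sumE; apply: eq_bigr => x _; rewrite mnm1E.
by rewrite (big_morph (fun m0 => 'X_[m0]) (@mpolyXD _ _) (@mpolyX0 _ _)).
Qed.

Definition Amx : 'M[{mpoly K[n]}]_u := \matrix_(i, j) 'X_(f i j).

Lemma mcoeff_det mm :
  ((\det Amx)@_mm = \sum_(pi : 'S_u) (-1) ^+ pi * (mono pi == mm)%:R)%R.
Proof.
rewrite /determinant raddf_sum; apply: eq_bigr => pi _.
have -> : (\prod_i Amx i (pi i))%R = 'X_[mono pi].
  by rewrite -prodX; apply: eq_bigr => i _; rewrite mxE.
exact: mcoeff_signX.
Qed.

Lemma mono_inj : injective mono.
Proof.
move=> p1 p2 E; apply/permP => x.
have h1 : 0 < mono p2 (f x (p1 x)).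
  by rewrite -E monoE (bigD1 x) //= eqxx.
move: h1; rewrite monoE.
case: (pickP (fun y => f y (p2 y) == f x (p1 x))) => [y /eqP e|none].
  by have [-> ->] := finj e.
by rewrite big1 // => y _; rewrite none.
Qed.

Lemma msupp_det1 mm : mm \in msupp (\det Amx) -> exists pi, mm = mono pi.
Proof.
rewrite mcoeff_msupp mcoeff_det.
case: (pickP (fun pi => mono pi == mm)) => [pi /eqP <-|none]; first by exists pi.
by rewrite big1 ?eqxx // => pi _; rewrite none mulr0.
Qed.

Lemma msupp_det2 pi : mono pi \in msupp (\det Amx).
Proof.
rewrite mcoeff_msupp mcoeff_det (bigD1 pi) //= eqxx big1 ?addr0.
  by rewrite mulr1 signr_eq0.
move=> p2 ne; have -> : (mono p2 == mono pi) = false.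
  by apply/negbTE; apply: contra ne => /eqP /mono_inj ->.
by rewrite mulr0.
Qed.

Lemma mono_pos pi j : 0 < mono pi j -> exists x, f x (pi x) = j.
Proof.
rewrite monoE; case: (pickP (fun x => f x (pi x) == j)) => [x /eqP e|none].
  by exists x.
by rewrite big1 // => x _; rewrite none.
Qed.

End DetG.

Section Conc.
Variables (V : finType) (r : nat) (s t : 'I_r -> V) (m : V -> nat).
Local Notation VT := (VarT s t m).
Variable rk : VT -> nat.
Hypothesis Hrk_inj : injective rk.
Hypothesis Hrk_cons : consistent_order rk.

Lemma var_eq (x y : VT) : var_arr x = var_arr y -> var_row x = var_row y ->
  var_col x = var_col y -> x = y.
Proof.
case: x => k [i j]; case: y => k' [i' j']; rewrite /var_arr /var_row /var_col /=.
move=> ek; subst k' => /val_inj -> /val_inj -> //.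
Qed.

Lemma find_varP (x : VT) : find_var s t m (var_arr x) (var_row x) (var_col x) = Some x.
Proof.
rewrite /find_var; case: pickP => [y /andP[/andP[/eqP e1 /eqP e2] /eqP e3]|none].
  by congr Some; apply: var_eq.
by have := none x; rewrite !eqxx.
Qed.

Lemma find_var_coord k a b (x : VT) : find_var s t m k a b = Some x ->
  [/\ var_arr x = k, var_row x = a & var_col x = b].
Proof.
rewrite /find_var; case: pickP => [y /andP[/andP[/eqP e1 /eqP e2] /eqP e3]|//].
by case=> <-.
Qed.

Lemma find_var_ex (k : 'I_r) a b : a < m (t k) -> b < m (s k) ->
  exists x : VT, [/\ find_var s t m k a b = Some x, var_arr x = k, var_row x = a & var_col x = b].
Proof.
move=> ha hb.
pose x : VT := existT _ k (Ordinal ha, Ordinal hb).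
by exists x; split => //; exact: (find_varP x).
Qed.

Definition FF (k : 'I_r) a b := if find_var s t m k a b is Some x then rk x else 0.

Lemma FF_var (x : VT) : FF (var_arr x) (var_row x) (var_col x) = rk x.
Proof. by rewrite /FF find_varP. Qed.

Local Notation vl := (vld t s m).

Lemma vl_ex k a b : vl k a b -> exists x : VT,
  [/\ find_var s t m k a b = Some x, var_arr x = k, var_row x = a & var_col x = b].
Proof. by case/andP; exact: find_var_ex. Qed.

Lemma vl_var (x : VT) : vl (var_arr x) (var_row x) (var_col x).
Proof. by case: x => k [i j]; apply/andP; split; rewrite /var_row /var_col /=. Qed.

Lemma FF_ex k a b : vl k a b -> exists x : VT,
  [/\ FF k a b = rk x, var_arr x = k, var_row x = a & var_col x = b].
Proof.
move=> v; have [x [e1 e2 e3 e4]] := vl_ex v.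
by exists x; rewrite /FF e1.
Qed.

Lemma FFinj ro al be ro' al' be' : vl ro al be -> vl ro' al' be' ->
  FF ro al be = FF ro' al' be' -> [/\ ro = ro', al = al' & be = be'].
Proof.
move=> v1 v2; have [x [-> <- <- <-]] := FF_ex v1; have [y [-> <- <- <-]] := FF_ex v2.
by move/Hrk_inj => ->.
Qed.

Lemma FFc1 ro al be be' : vl ro al be -> vl ro al be' -> be < be' ->
  FF ro al be' < FF ro al be.
Proof.
move=> v1 v2 lt; have [x [-> e1 e2 e3]] := FF_ex v1; have [y [-> f1 f2 f3]] := FF_ex v2.
have [h _ _ _] := Hrk_cons x y; apply: h; by rewrite ?e1 ?f1 ?e2 ?f2 ?e3 ?f3.
Qed.

Lemma FFc2 ro al al' be : vl ro al be -> vl ro al' be -> al < al' ->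
  FF ro al' be < FF ro al be.
Proof.
move=> v1 v2 lt; have [x [-> e1 e2 e3]] := FF_ex v1; have [y [-> f1 f2 f3]] := FF_ex v2.
have [_ h _ _] := Hrk_cons x y; apply: h; by rewrite ?e1 ?f1 ?e2 ?f2 ?e3 ?f3.
Qed.

Lemma FFc3 ro ro' al be be' : t ro = t ro' -> vl ro al be -> vl ro' al be' ->
  ro < ro' -> FF ro' al be' < FF ro al be.
Proof.
move=> E v1 v2 lt; have [x [-> e1 e2 e3]] := FF_ex v1; have [y [-> f1 f2 f3]] := FF_ex v2.
have [_ _ h _] := Hrk_cons x y; apply: h; by rewrite ?e1 ?f1 ?e2 ?f2 ?e3 ?f3.
Qed.

Lemma FFc4 ro ro' al al' be : s ro = s ro' -> vl ro al be -> vl ro' al' be ->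
  ro < ro' -> FF ro' al' be < FF ro al be.
Proof.
move=> E v1 v2 lt; have [x [-> e1 e2 e3]] := FF_ex v1; have [y [-> f1 f2 f3]] := FF_ex v2.
have [_ _ _ h] := Hrk_cons x y; apply: h; by rewrite ?e1 ?f1 ?e2 ?f2 ?e3 ?f3.
Qed.

Lemma xvE (K : fieldType) (x : VT) :
  xv s t m K (var_arr x) (var_row x) (var_col x) = 'X_(var_idx x).
Proof. by rewrite /xv find_varP. Qed.

Lemma mrank_idx (x : VT) : mrank rk (var_idx x) = rk x.
Proof. by rewrite /mrank /var_idx enum_rankK. Qed.

Lemma mrank_inj : injective (mrank rk).
Proof. by move=> i j /Hrk_inj /enum_val_inj. Qed.

Lemma lex_asym m1 m2 : lex_gt rk m1 m2 -> lex_gt rk m2 m1 -> False.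
Proof.
case=> i [h1 h2] [j [h3 h4]].
case: (ltngtP (mrank rk i) (mrank rk j)) => [lt|lt|eq].
- by move: h3; rewrite h2 // ltnn.
- by move: h1; rewrite h4 // ltnn.
- by move: h1; rewrite (mrank_inj eq) => h1; have := ltn_trans h1 h3; rewrite ltnn.
Qed.

Section Det.
Variables (K : fieldType) (u : nat) (f : 'I_u -> 'I_u -> 'I_(nvar s t m)).
Hypothesis finj : forall i j i' j', f i j = f i' j' -> i = i' /\ j = j'.
Local Notation mono := (mono f).
Local Notation Amx := (Amx K f).
Lemma LM_swap lm : is_LM rk (\det Amx) lm -> exists pi, lm = mono pi /\
  forall i i', i != i' ->
  ~ [/\ mrank rk (f i (pi i)) < mrank rk (f i (pi i')),
        mrank rk (f i' (pi i')) < mrank rk (f i (pi i')) &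
        mrank rk (f i' (pi i)) < mrank rk (f i (pi i'))].
Proof.
case=> lmin lmax.
have [pi epi] := msupp_det1 lmin.
exists pi; split => // i i' ne [h1 h2 h3].
set J := f i (pi i') in h1 h2 h3.
pose pi' := (tperm i i' * pi)%g.
have pi'E x : pi' x = pi (tperm i i' x) by rewrite permM.
have gt : lex_gt rk (mono pi') (mono pi).
  exists J; split.
    rewrite !monoE big1; last first.
      move=> x _; apply/eqP; rewrite eqb0; apply/eqP => /finj [ex /perm_inj e].
      by move: ne; rewrite -ex e eqxx.
    by rewrite (bigD1 i) //= pi'E tpermL eqxx.
  move=> j hj; rewrite !monoE; apply: eq_bigr => x _; rewrite pi'E.
  case: tpermP => [->|->|xi xi'].
  - have -> : (f i (pi i') == j) = false by apply/eqP => e; move: hj; rewrite -e ltnn.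
    have -> : (f i (pi i) == j) = false.
      by apply/eqP => e; move: hj; rewrite -e => hj; have := ltn_trans h1 hj; rewrite ltnn.
    by [].
  - have -> : (f i' (pi i) == j) = false.
      by apply/eqP => e; move: hj; rewrite -e => hj; have := ltn_trans h3 hj; rewrite ltnn.
    have -> : (f i' (pi i') == j) = false.
      by apply/eqP => e; move: hj; rewrite -e => hj; have := ltn_trans h2 hj; rewrite ltnn.
    by [].
  - by [].
have ne' : mono pi' != lm.
  apply/eqP => e; case: gt => j [hj _]; move: hj; rewrite e epi ltnn //.
have := lmax _ (msupp_det2 K finj pi') ne'; rewrite epi => gt'.
exact: lex_asym gt gt'.
Qed.

End Det.

Lemma colsink_eq (c c' : ColSink s m) : tag c = tag c' ->
  (tagged c : nat) = tagged c' -> c = c'.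
Proof. by case: c => k i; case: c' => k' i' /= ek; subst k' => /val_inj ->. Qed.

Lemma rowsrc_eq (c c' : RowSource t m) : tag c = tag c' ->
  (tagged c : nat) = tagged c' -> c = c'.
Proof. by case: c => k i; case: c' => k' i' /= ek; subst k' => /val_inj ->. Qed.

Lemma var_idx_inj : injective (@var_idx _ _ s t m).
Proof. exact: enum_rank_inj. Qed.

Definition supp (lm : 'X_{1..(nvar s t m)}) (x : VT) := 0 < lm (var_idx x).

Section Sink.
Variables (K : fieldType) (g1 : V) (u : nat) (M : {mpoly K[nvar s t m]})
  (lmM : 'X_{1..(nvar s t m)}).
Hypothesis HM : is_minor_sink g1 u M.
Hypothesis HlmM : is_LM rk M lmM.

Lemma sink_props :
  [/\ forall x, supp lmM x -> t (var_arr x) = g1,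
      forall x y, supp lmM x -> supp lmM y -> x != y -> var_row x != var_row y &
      forall x y, supp lmM x -> supp lmM y -> var_row x < var_row y ->
        var_arr x < var_arr y \/ (var_arr x = var_arr y /\ var_col x < var_col y)].
Proof.
case: HM => ra [ca [rinj cinj Ht EM]].
pose Xs i j : VT := existT _ (tag (ca j)) (cast_ord (esym (congr1 m (Ht j))) (ra i), tagged (ca j)).
pose f i j := var_idx (Xs i j).
have finj : forall i j i' j', f i j = f i' j' -> i = i' /\ j = j'.
  move=> i j i' j' /var_idx_inj e.
  have e1 := congr1 (@var_arr _ _ s t m) e; have e2 := congr1 (@var_row _ _ s t m) e.
  have e3 := congr1 (@var_col _ _ s t m) e.
  split; first by apply: rinj; apply: val_inj.
  by apply: cinj; apply: colsink_eq.
have EM' : M = (\det (Amx K f))%R.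
  rewrite EM; congr (determinant _); apply/matrixP => i j; rewrite !mxE.
  exact: (xvE K (Xs i j)).
have HlmM' := HlmM; rewrite EM' in HlmM'.
have [pi [elm hsw]] := LM_swap finj HlmM'.
have FXs i j : rk (Xs i j) = FF (tag (ca j)) (ra i) (tagged (ca j)) by rewrite -FF_var.
have vXs i j : vl (tag (ca j)) (ra i) (tagged (ca j)) := vl_var (Xs i j).
have mrf i j : mrank rk (f i j) = rk (Xs i j) by rewrite mrank_idx.
have inS x : supp lmM x -> exists i, x = Xs i (pi i).
  rewrite /supp elm => /mono_pos [i e]; exists i; exact: var_idx_inj (esym e).
have key : forall i i', ra i < ra i' -> (tag (ca (pi i)) < tag (ca (pi i')) \/
    (tag (ca (pi i)) = tag (ca (pi i')) /\ tagged (ca (pi i)) < tagged (ca (pi i')))).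
  move=> i i' lt.
  have nii : i != i' by apply/eqP => e; move: lt; rewrite e ltnn.
  set c := ca (pi i); set c' := ca (pi i').
  have ncc : c != c' by apply/eqP => /cinj /perm_inj e; move: nii; rewrite e eqxx.
  have P1 : (tag c' < tag c \/ (tag c' = tag c /\ tagged c' < tagged c)) ->
      FF (tag c) (ra i) (tagged c) < FF (tag c') (ra i) (tagged c').
    move=> hh; apply: (rowcmp FFc1 FFc3 _ (vXs i (pi i')) (vXs i (pi i)) hh).
    by rewrite !Ht.
  have P2 : FF (tag c') (ra i') (tagged c') < FF (tag c') (ra i) (tagged c').
    exact: (FFc2 (vXs i (pi i')) (vXs i' (pi i')) lt).
  have P3 : FF (tag c) (ra i') (tagged c) < FF (tag c) (ra i) (tagged c).
    exact: (FFc2 (vXs i (pi i)) (vXs i' (pi i)) lt).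
  have contra : (tag c' < tag c \/ (tag c' = tag c /\ tagged c' < tagged c)) -> False.
    move=> hh; apply: (hsw i i' nii); rewrite !mrf !FXs -/c -/c'; split => //.
      exact: P1.
    exact: ltn_trans P3 (P1 hh).
  case: (ltngtP (tag c) (tag c')) => [h|h|h].
  - by left.
  - by exfalso; apply: contra; left.
  - have et : tag c = tag c' := val_inj h.
    case: (ltngtP (tagged c) (tagged c')) => [h2|h2|h2].
    + by right.
    + by exfalso; apply: contra; right.
    + by exfalso; move: ncc; rewrite (colsink_eq et h2) eqxx.
split.
- by move=> x /inS [i ->]; exact: Ht.
- move=> x y /inS [i ->] /inS [i' ->] ne; apply/eqP => e.
  have : ra i = ra i' by apply: val_inj.
  by move/rinj => ei; move: ne; rewrite ei eqxx.
- by move=> x y /inS [i ->] /inS [i' ->] lt; apply: key.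
Qed.

End Sink.

Section Source.
Variables (K : fieldType) (g2 : V) (v : nat) (N : {mpoly K[nvar s t m]})
  (lmN : 'X_{1..(nvar s t m)}).
Hypothesis HN : is_minor_source g2 v N.
Hypothesis HlmN : is_LM rk N lmN.

Lemma source_props :
  [/\ forall x, supp lmN x -> s (var_arr x) = g2,
      forall x y, supp lmN x -> supp lmN y -> x != y -> var_col x != var_col y &
      forall x y, supp lmN x -> supp lmN y -> var_col x < var_col y ->
        var_arr x < var_arr y \/ (var_arr x = var_arr y /\ var_row x < var_row y)].
Proof.
case: HN => rb [cb [rinj cinj Hs EN]].
pose Xn i j : VT := existT _ (tag (rb i)) (tagged (rb i), cast_ord (esym (congr1 m (Hs i))) (cb j)).
pose f i j := var_idx (Xn i j).
have finj : forall i j i' j', f i j = f i' j' -> i = i' /\ j = j'.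
  move=> i j i' j' /var_idx_inj e.
  have e1 := congr1 (@var_arr _ _ s t m) e; have e2 := congr1 (@var_row _ _ s t m) e.
  have e3 := congr1 (@var_col _ _ s t m) e.
  split; first by apply: rinj; apply: rowsrc_eq.
  by apply: cinj; apply: val_inj.
have EN' : N = (\det (Amx K f))%R.
  rewrite EN; congr (determinant _); apply/matrixP => i j; rewrite !mxE.
  exact: (xvE K (Xn i j)).
have HlmN' := HlmN; rewrite EN' in HlmN'.
have [pi [elm hsw]] := LM_swap finj HlmN'.
have FXn i j : rk (Xn i j) = FF (tag (rb i)) (tagged (rb i)) (cb j) by rewrite -FF_var.
have vXn i j : vl (tag (rb i)) (tagged (rb i)) (cb j) := vl_var (Xn i j).
have mrf i j : mrank rk (f i j) = rk (Xn i j) by rewrite mrank_idx.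
have inS x : supp lmN x -> exists i, x = Xn i (pi i).
  rewrite /supp elm => /mono_pos [i e]; exists i; exact: var_idx_inj (esym e).
have key : forall i i', cb (pi i) < cb (pi i') -> (tag (rb i) < tag (rb i') \/
    (tag (rb i) = tag (rb i') /\ tagged (rb i) < tagged (rb i'))).
  move=> i i' lt.
  have nii : i' != i by apply/eqP => e; move: lt; rewrite e ltnn.
  set c := rb i; set c' := rb i'.
  have ncc : c != c' by apply/eqP => /rinj e; move: nii; rewrite e eqxx.
  have P1 : (tag c' < tag c \/ (tag c' = tag c /\ tagged c' < tagged c)) ->
      FF (tag c) (tagged c) (cb (pi i)) < FF (tag c') (tagged c') (cb (pi i)).
    move=> hh; apply: (colcmp FFc2 FFc4 _ (vXn i' (pi i)) (vXn i (pi i)) hh).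
    by rewrite !Hs.
  have P2 : FF (tag c') (tagged c') (cb (pi i')) < FF (tag c') (tagged c') (cb (pi i)).
    exact: (FFc1 (vXn i' (pi i)) (vXn i' (pi i')) lt).
  have P3 : FF (tag c) (tagged c) (cb (pi i')) < FF (tag c) (tagged c) (cb (pi i)).
    exact: (FFc1 (vXn i (pi i)) (vXn i (pi i')) lt).
  have contra : (tag c' < tag c \/ (tag c' = tag c /\ tagged c' < tagged c)) -> False.
    move=> hh; apply: (hsw i' i nii); rewrite !mrf !FXn -/c -/c'; split => //.
      exact: P1.
    exact: ltn_trans P3 (P1 hh).
  case: (ltngtP (tag c) (tag c')) => [h|h|h].
  - by left.
  - by exfalso; apply: contra; left.
  - have et : tag c = tag c' := val_inj h.
    case: (ltngtP (tagged c) (tagged c')) => [h2|h2|h2].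
    + by right.
    + by exfalso; apply: contra; right.
    + by exfalso; move: ncc; rewrite (rowsrc_eq et h2) eqxx.
split.
- by move=> x /inS [i ->]; exact: Hs.
- move=> x y /inS [i ->] /inS [i' ->] ne; apply/eqP => e.
  have : cb (pi i) = cb (pi i') by apply: val_inj.
  by move/cinj/perm_inj => ei; move: ne; rewrite ei eqxx.
- by move=> x y /inS [i ->] /inS [i' ->] lt; apply: key.
Qed.

End Source.

Lemma card_sum l (P : pred 'I_l) : #|[set i | P i]| = \sum_(i < l) (P i : nat).
Proof.
rewrite -sum1_card big_mkcond /=; apply: eq_bigr => i _; rewrite inE.
by case: (P i).
Qed.

Lemma cnt_mrank l (f g : 'I_l -> nat) :
  (forall i, exists j, f i = mrank rk j) -> (forall i, exists j, g i = mrank rk j) ->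
  [/\ (forall j, cnt f (mrank rk j) = cnt g (mrank rk j)) -> eqcnt f g &
      lex_gt rk [multinom cnt f (mrank rk j) | j < nvar s t m]
                [multinom cnt g (mrank rk j) | j < nvar s t m] <-> lexgtc f g].
Proof.
move=> hf hg.
have zero : forall (h : 'I_l -> nat) w, (forall i, exists j, h i = mrank rk j) ->
    ~~ [exists j, mrank rk j == w] -> cnt h w = 0.
  move=> h w hh nw; apply: big1 => i _; apply/eqP; rewrite eqb0; apply/eqP => e.
  have [j ej] := hh i; move/negP: nw; apply; apply/existsP; exists j; by rewrite -ej e.
have pos : forall (h : 'I_l -> nat) w, (forall i, exists j, h i = mrank rk j) ->
    0 < cnt h w -> exists j, w = mrank rk j.
  move=> h w hh; case: (pickP (fun i => h i == w)) => [i /eqP e|none].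
    by have [j ej] := hh i; exists j; rewrite -e ej.
  by rewrite /cnt big1 // => i _; rewrite none.
split.
  move=> H w; case: (boolP [exists j, mrank rk j == w]) => [/existsP [j /eqP <-]|nw].
    exact: H.
  by rewrite !zero.
split.
  case=> j [h1 h2]; exists (mrank rk j); split; first by move: h1; rewrite !mnmE.
  move=> w' lt; case: (boolP [exists j, mrank rk j == w']) => [/existsP [j' /eqP ej]|nw].
    by have := h2 j'; rewrite !mnmE ej => ->.
  by rewrite !zero.
case=> w [h1 h2].
have [j ej] := pos f w hf (leq_ltn_trans (leq0n _) h1).
exists j; split; first by rewrite !mnmE -ej.
by move=> j' lt; rewrite !mnmE; apply: h2; rewrite ej.
Qed.

Section Final.
Variables (K : fieldType) (g1 g2 : V) (u v : nat) (M N : {mpoly K[nvar s t m]})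
  (lmM lmN : 'X_{1..(nvar s t m)}).
Hypothesis HM : is_minor_sink g1 u M.
Hypothesis HN : is_minor_source g2 v N.
Hypothesis HlmM : is_LM rk M lmM.
Hypothesis HlmN : is_LM rk N lmN.
Variables (l : nat) (p : 'I_l -> VT).
Hypothesis Hp_dec : forall i j : 'I_l, (i < j)%N -> (rk (p j) < rk (p i))%N.
Hypothesis HL : forall j : 'I_(nvar s t m),
  maxn (lmM j) (lmN j) = #|[set i : 'I_l | var_idx (p i) == j]|.

Let arr (i : 'I_l) := var_arr (p i).
Let aa (i : 'I_l) := var_row (p i).
Let bb (i : 'I_l) := var_col (p i).
Let SM := fun i : 'I_l => (0 < lmM (var_idx (p i)))%N.
Let SN := fun i : 'I_l => (0 < lmN (var_idx (p i)))%N.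

Let Hvp (i : 'I_l) : vl (arr i) (aa i) (bb i) := vl_var (p i).
Let FpE (i : 'I_l) : Fp FF arr aa bb i = rk (p i) := FF_var (p i).
Let Hdec (i j : 'I_l) : (i < j)%N -> Fp FF arr aa bb j < Fp FF arr aa bb i.
Proof. by rewrite !FpE; exact: Hp_dec. Qed.

Let SP := sink_props HM HlmM.
Let NP := source_props HN HlmN.

Let HtM (i : 'I_l) : SM i -> t (arr i) = g1.
Proof. by case: SP => h _ _; exact: h. Qed.
Let HsN (i : 'I_l) : SN i -> s (arr i) = g2.
Proof. by case: NP => h _ _; exact: h. Qed.

Let HchM (i j : 'I_l) : SM i -> SM j -> i < j ->
  aa i < aa j /\ (arr i < arr j \/ (arr i = arr j /\ bb i < bb j)).
Proof.
move=> si sj lt; case: SP => P1 P2 P3.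
have ne : p i != p j.
  by apply/eqP => e; have := Hp_dec lt; rewrite e ltnn.
have rne := P2 _ _ si sj ne.
have [h|h] : aa i < aa j \/ aa j < aa i by apply/orP; rewrite -neq_ltn.
  by split => //; exact: P3.
exfalso.
have c := P3 _ _ sj si h.
have vi := vl_var (p i); have vj := vl_var (p j).
have v3 : vl (arr i) (aa j) (bb i).
  apply/andP; split; last exact: (andP vi).2.
  have e : t (arr i) = t (arr j) by rewrite (HtM si) (HtM sj).
  rewrite e; exact: (andP vj).1.
have l1 : FF (arr i) (aa i) (bb i) < FF (arr i) (aa j) (bb i) := FFc2 v3 vi h.
have l2 : FF (arr i) (aa j) (bb i) < FF (arr j) (aa j) (bb j).
  by apply: (rowcmp FFc1 FFc3 _ vj v3 c); rewrite /arr (HtM si) (HtM sj).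
have := Hdec lt; rewrite /Fp.
by move=> l3; have := ltn_trans l3 (ltn_trans l1 l2); rewrite ltnn.
Qed.

Let HchN (i j : 'I_l) : SN i -> SN j -> i < j ->
  bb i < bb j /\ (arr i < arr j \/ (arr i = arr j /\ aa i < aa j)).
Proof.
move=> si sj lt; case: NP => P1 P2 P3.
have ne : p i != p j.
  by apply/eqP => e; have := Hp_dec lt; rewrite e ltnn.
have rne := P2 _ _ si sj ne.
have [h|h] : bb i < bb j \/ bb j < bb i by apply/orP; rewrite -neq_ltn.
  by split => //; exact: P3.
exfalso.
have c := P3 _ _ sj si h.
have vi := vl_var (p i); have vj := vl_var (p j).
have v3 : vl (arr i) (aa i) (bb j).
  apply/andP; split; first exact: (andP vi).1.
  have e : s (arr i) = s (arr j) by rewrite (HsN si) (HsN sj).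
  rewrite e; exact: (andP vj).2.
have l1 : FF (arr i) (aa i) (bb i) < FF (arr i) (aa i) (bb j) := FFc1 v3 vi h.
have l2 : FF (arr i) (aa i) (bb j) < FF (arr j) (aa j) (bb j).
  by apply: (colcmp FFc2 FFc4 _ vj v3 c); rewrite /arr (HsN si) (HsN sj).
have := Hdec lt; rewrite /Fp.
by move=> l3; have := ltn_trans l3 (ltn_trans l1 l2); rewrite ltnn.
Qed.

Let Lval : [multinom maxn (lmM j) (lmN j) | j < nvar s t m] =
  [multinom cnt (Fp FF arr aa bb) (mrank rk j) | j < nvar s t m].
Proof.
apply/mnmP => j; rewrite !mnmE HL card_sum; apply: eq_bigr => i _.
rewrite FpE -(mrank_idx (p i)) (inj_eq mrank_inj) //.
Qed.

Let Lmval sg tau : inG SM SN sg tau -> Lmon p sg tau =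
  [multinom cnt (Fq FF arr aa bb sg tau) (mrank rk j) | j < nvar s t m].
Proof.
move=> HG; apply/mnmP => j; rewrite !mnmE card_sum; apply: eq_bigr => i _.
have [x [e1 e2 e3 e4]] := vl_ex (vq Hvp HtM HsN HG i).
rewrite /Fq /FF /arr /aa /bb in e1 *; rewrite e1 /=.
by rewrite -(mrank_idx x) (inj_eq mrank_inj).
Qed.

Let rkP (i : 'I_l) : exists j, Fp FF arr aa bb i = mrank rk j.
Proof. by exists (var_idx (p i)); rewrite FpE mrank_idx. Qed.

Let rkQ sg tau : inG SM SN sg tau -> forall i, exists j, Fq FF arr aa bb sg tau i = mrank rk j.
Proof.
move=> HG i; have [x [e1 _ _ _]] := vl_ex (vq Hvp HtM HsN HG i).
by exists (var_idx x); rewrite mrank_idx /Fq /FF e1.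
Qed.

Lemma final_main :
  (forall sg tau : {perm 'I_l}, inG SM SN sg tau ->
     (Lmon p sg tau = [multinom maxn (lmM j) (lmN j) | j < nvar s t m] <->
      inH arr SM SN sg tau)) /\
  (viol arr aa bb SM SN <->
   exists sg tau : {perm 'I_l}, inG SM SN sg tau /\
     lex_gt rk (Lmon p sg tau) [multinom maxn (lmM j) (lmN j) | j < nvar s t m]).
Proof.
split.
  move=> sg tau HG; rewrite Lval (Lmval HG).
  rewrite -(partA FFinj FFc1 FFc2 FFc3 FFc4 Hvp Hdec HtM HsN HchM HchN HG).
  have [E1 _] := cnt_mrank (rkQ HG) rkP.
  split; last by move=> h; apply/mnmP => j; rewrite !mnmE h.
  move=> e; apply: E1 => j.
  by have := congr1 (fun mm : 'X_{1..(nvar s t m)} => mm j) e; rewrite /= !mnmE.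
rewrite (partB FFinj FFc1 FFc2 FFc3 FFc4 Hvp Hdec HtM HsN HchM HchN).
split; case=> sg [tau [HG h]]; exists sg, tau; split => //;
  have [_ E2] := cnt_mrank (rkQ HG) rkP; move: h; rewrite Lval (Lmval HG) E2 //.
Qed.

End Final.

End Conc.

End Helpers.
Import Helpers.
Unset Implicit Arguments.
Set Strict Implicit.

Theorem proposition2p13
  (K : fieldType) (V : finType) (r : nat) (s t : 'I_r -> V) (m : V -> nat)
  (Hbip : bipartite s t)
  (rk : VarT s t m -> nat) (Hrk_inj : injective rk)
  (Hrk_cons : consistent_order rk)
  (g1 g2 : V) (h : 'I_r) (Hh : s h = g2 /\ t h = g1)
  (u v : nat) (Hu : (0 < u)%N) (Hv : (0 < v)%N)
  (M N : {mpoly K[nvar s t m]})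
  (HM : is_minor_sink g1 u M) (HN : is_minor_source g2 v N)
  (lmM lmN : 'X_{1..nvar s t m})
  (HlmM : is_LM rk M lmM) (HlmN : is_LM rk N lmN)
  (l : nat) (p : 'I_l -> VarT s t m)
  (Hp_dec : forall i j : 'I_l, (i < j)%N -> (rk (p j) < rk (p i))%N)
  (HL : forall j : 'I_(nvar s t m),
          maxn (lmM j) (lmN j) = #|[set i : 'I_l | var_idx (p i) == j]|) :
  let inSM (i : 'I_l) := (0 < lmM (var_idx (p i)))%N in
  let inSN (i : 'I_l) := (0 < lmN (var_idx (p i)))%N in
  let inG (sg tau : {perm 'I_l}) :=
    (forall i, ~~ inSM i -> sg i = i) /\ (forall i, ~~ inSN i -> tau i = i) in
  let L : 'X_{1..nvar s t m} :=
    [multinom maxn (lmM j) (lmN j) | j < nvar s t m] in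
  (* (a) *)
  (forall sg tau : {perm 'I_l}, inG sg tau ->
     (Lmon p sg tau = L <->
      [/\ sg = tau,
          (forall i, ~~ (inSM i && inSN i) -> sg i = i) &
          (forall i, var_arr (p (sg i)) = var_arr (p i))])) /\
  (* (b) *)
  ((exists i j k : 'I_l,
      [/\ [/\ i != j, j != k & i != k],
          [/\ inSM i, inSN j, inSM k & inSN k],
          var_arr (p i) = var_arr (p j) /\ var_arr (p j) = var_arr (p k),
          (var_row (p i) < var_row (p j) < var_row (p k))%N &
          (var_col (p j) < var_col (p i) < var_col (p k))%N])
   <->
   exists sg tau : {perm 'I_l}, inG sg tau /\ lex_gt rk (Lmon p sg tau) L).
Proof.
move=> inSM inSN inG0 L0.
exact: (final_main Hrk_inj Hrk_cons HM HN HlmM HlmN Hp_dec HL).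
Qed.
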